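(* Let $\mathcal{V}$ be an equational class and $\mathbf{A}\in\mathsf{FP}(\mathcal{V})$ such that the set $\mathrm{Con}(\mathbf{A})$ of congruences of $\mathbf{A}$ is totally ordered by inclusion. If $\mathsf{C}_{\mathcal{V}}(\mathbf{A})\neq\emptyset$, then $\mathsf{C}_{\mathcal{V}}(\mathbf{A})$ is totally (pre)ordered and $\mathrm{type}(\mathsf{C}_{\mathcal{V}}(\mathbf{A}))\in\{1,0\}$. In particular, if $\mathbf{A}$ is simple, then either $\mathsf{C}_{\mathcal{V}}(\mathbf{A})=\emptyset$ or $\mathrm{type}(\mathsf{C}_{\mathcal{V}}(\mathbf{A}))=1$.
   Context: $\mathsf{FP}(\mathcal{V})$ is the class of finitely presented algebras of $\mathcal{V}$; $\mathbf{F}_{\mathcal{V}}(\omega)$ is the free algebra of $\mathcal{V}$ on countably many generators. An algebra is exact in $\mathcal{V}$ if isomorphic to a finitely generated subalgebra of $\mathbf{F}_{\mathcal{V}}(\omega)$. A coexact unifier of $\mathbf{A}$ is an onto homomorphism $u\colon\mathbf{A}\to\mathbf{E}$ with $\mathbf{E}$ exact in $\mathcal{V}$; for coexact unifiers $u_1\colon\mathbf{A}\to\mathbf{E}_1$, $u_2\colon\mathbf{A}\to\mathbf{E}_2$, $u_2\le u_1$ iff there is a homomorphism $f\colon\mathbf{E}_1\to\mathbf{E}_2$ with $f\circ u_1=u_2$; $\mathsf{C}_{\mathcal{V}}(\mathbf{A})$ is the set of coexact unifiers preordered by $\le$. Types of a nonempty preordered set via $\mu$-sets (complete sets — every element lies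 below a member — of pairwise incomparable elements): $0$ if none exists, $\infty$ if infinite, $\omega$ if finite of size $>1$, $1$ if of size $1$. *)

(* Defs.v *)
From Stdlib Require Import ClassicalEpsilon List.
From mathcomp Require Import all_boot.

Set Implicit Arguments.
Unset Strict Implicit.
Unset Printing Implicit Defensive.

Record signature := Signature { ops : Type; arity : ops -> nat }.

Record algebra (S : signature) := Algebra {
  carrier :> Type;
  op : forall o : ops S, ('I_(arity o) -> carrier) -> carrier }.
Arguments op {S} a o _ : rename.

Inductive term (S : signature) (X : Type) : Type :=
  | tvar : X -> term S X
  | tapp : forall o : ops S, ('I_(arity o) -> term S X) -> term S X.

Fixpoint eval (S : signature) (X : Type) (A : algebra S) (v : X -> A)
  (t : term S X) : A :=
  match t with
  | tvar x => v x
  | tapp o ts => op A o (fun i => eval v (ts i))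
  end.

(** A set of identities (over countably many variables) and its
    equational class: V = Mod(Eq).  [inV Eq A] means A belongs to V. *)
Definition inV (S : signature) (Eq : term S nat * term S nat -> Prop)
  (A : algebra S) : Prop :=
  forall e, Eq e -> forall v : nat -> A, eval v e.1 = eval v e.2.

Definition is_hom (S : signature) (A B : algebra S) (f : A -> B) : Prop :=
  forall o (args : 'I_(arity o) -> A), f (op A o args) = op B o (fun i => f (args i)).

Inductive gen (S : signature) (A : algebra S) (G : A -> Prop) : A -> Prop :=
  | gen_in : forall x, G x -> gen G x
  | gen_op : forall o (args : 'I_(arity o) -> A),
      (forall i, gen G (args i)) -> gen G (op A o args).

Definition congruence (S : signature) (A : algebra S) (th : A -> A -> Prop) : Prop :=
  (forall x, th x x) /\ (forall x y, th x y -> th y x) /\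
  (forall x y z, th x y -> th y z -> th x z) /\
  (forall o (a b : 'I_(arity o) -> A), (forall i, th (a i) (b i)) ->
      th (op A o a) (op A o b)).

Definition con_chain (S : signature) (A : algebra S) : Prop :=
  forall th1 th2 : A -> A -> Prop, congruence th1 -> congruence th2 ->
    (forall x y, th1 x y -> th2 x y) \/ (forall x y, th2 x y -> th1 x y).

Definition simple (S : signature) (A : algebra S) : Prop :=
  (exists x y : A, x <> y) /\
  forall th : A -> A -> Prop, congruence th ->
    (forall x y, th x y <-> x = y) \/ (forall x y, th x y).

(** (F, g) is the free algebra F_V(omega) of V on the generators g 0, g 1, ...
    (characterized up to isomorphism by its universal property). *)
Definition free_omega (S : signature) (Eq : term S nat * term S nat -> Prop)
  (F : algebra S) (g : nat -> F) : Prop :=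
  inV Eq F /\ (forall x, gen (fun y => exists k, y = g k) x) /\
  forall B : algebra S, inV Eq B -> forall b : nat -> B,
    exists f : F -> B, is_hom f /\ forall k, f (g k) = b k.

(** A is finitely presented in V: A = < a_1..a_n | R > in V with R finite,
    i.e. A is isomorphic to F_V(n)/Cg(R). *)
Definition fin_presented (S : signature) (Eq : term S nat * term S nat -> Prop)
  (A : algebra S) : Prop :=
  inV Eq A /\
  exists (n : nat) (a : 'I_n -> A) (R : list (term S 'I_n * term S 'I_n)),
    (forall x, gen (fun y => exists i, y = a i) x) /\
    (forall r, In r R -> eval a r.1 = eval a r.2) /\
    forall B : algebra S, inV Eq B -> forall b : 'I_n -> B,
      (forall r, In r R -> eval b r.1 = eval b r.2) ->
      exists f : A -> B, is_hom f /\ forall i, f (a i) = b i.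

(** A is exact in V: isomorphic to a finitely generated subalgebra of F_V(omega) *)
Definition exact (S : signature) (Eq : term S nat * term S nat -> Prop)
  (A : algebra S) : Prop :=
  exists (F : algebra S) (g : nat -> F), @free_omega S Eq F g /\
  exists (h : A -> F) (l : list F),
    is_hom h /\ (forall x y, h x = h y -> x = y) /\
    (forall y, (exists x, h x = y) <-> gen (fun z => In z l) y).

Record coexact (S : signature) (Eq : term S nat * term S nat -> Prop)
  (A : algebra S) := Coexact {
  cx_alg : algebra S;
  cx_map : A -> cx_alg;
  cx_hom : is_hom cx_map;
  cx_onto : forall y, exists x, cx_map x = y;
  cx_exact : exact Eq cx_alg }.

(** unif_le u2 u1  :  u2 <= u1  iff  f o u1 = u2 for some homomorphism f *)
Definition unif_le (S : signature) (Eq : term S nat * term S nat -> Prop)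
  (A : algebra S) (u2 u1 : coexact Eq A) : Prop :=
  exists f : cx_alg u1 -> cx_alg u2, is_hom f /\
    forall a, f (cx_map u1 a) = cx_map u2 a.

Inductive settype := type0 | type1 | typeomega | typeinf.

Definition mu_set (T : Type) (le : T -> T -> Prop) (M : T -> Prop) : Prop :=
  (forall x, exists m, M m /\ le x m) /\
  (forall m m', M m -> M m' -> m <> m' -> ~ le m m' /\ ~ le m' m).

Definition ptype (T : Type) (le : T -> T -> Prop) : settype :=
  if excluded_middle_informative (exists M, mu_set le M) then
    if excluded_middle_informative
         (exists M, mu_set le M /\ exists m, forall x, M x <-> x = m) then type1
    else if excluded_middle_informative
         (exists M (l : list T), mu_set le M /\ NoDup l /\ (forall x, M x <-> In x l))
    then typeomega else typeinf
  else type0.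

(* Main.v *)
Require Import Defs.
From Stdlib Require Import ClassicalEpsilon List Classical FunctionalExtensionality.
From mathcomp Require Import all_boot.

Lemma ker_cong (S : signature) (Eq : term S nat * term S nat -> Prop)
  (A : algebra S) (u : coexact Eq A) :
  congruence (fun x y : A => cx_map u x = cx_map u y).
Proof.
split; [by []|split; [by move=> x y ->|split; [by move=> x y z -> ->|]]].
move=> o a b H; rewrite !(@cx_hom _ _ _ u); f_equal.
by apply: functional_extensionality_dep => i.
Qed.

Lemma ker_le (S : signature) (Eq : term S nat * term S nat -> Prop)
  (A : algebra S) (u1 u2 : coexact Eq A) :
  (forall x y, cx_map u1 x = cx_map u1 y -> cx_map u2 x = cx_map u2 y) ->
  unif_le u2 u1.
Proof.
move=> H.
pose pre := fun y : cx_alg u1 =>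
  proj1_sig (constructive_indefinite_description _ (@cx_onto _ _ _ u1 y)).
have preP : forall y, cx_map u1 (pre y) = y.
  by move=> y; rewrite /pre; case: constructive_indefinite_description.
exists (fun y => cx_map u2 (pre y)); split.
- move=> o args.
  have E : op (cx_alg u1) o args = cx_map u1 (op A o (fun i => pre (args i))).
    rewrite (@cx_hom _ _ _ u1); f_equal.
    by apply: functional_extensionality_dep => i; rewrite preP.
  rewrite (H (pre (op (cx_alg u1) o args)) (op A o (fun i => pre (args i)))).
    by rewrite (@cx_hom _ _ _ u2).
  by rewrite preP.
- by move=> a; apply: H; rewrite preP.
Qed.

Lemma ptype_max (T : Type) (le : T -> T -> Prop) (m : T) :
  (forall x, le x m) -> ptype le = type1.
Proof.
move=> Hm.
have HM : mu_set le (fun x => x = m).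
  split; first by move=> x; exists m.
  by move=> a b Ha Hb H; exfalso; apply: H; rewrite Ha Hb.
unfold ptype.
destruct (excluded_middle_informative (exists M, mu_set le M)) as [e|n];
  last by exfalso; apply: n; exists (fun x => x = m).
destruct (excluded_middle_informative _) as [e'|n] => //.
by exfalso; apply: n; exists (fun x => x = m); split => //; exists m.
Qed.

Lemma ptype_total (T : Type) (le : T -> T -> Prop) :
  inhabited T -> (forall x y, le x y \/ le y x) -> ptype le = type1 \/ ptype le = type0.
Proof.
move=> [x0] Ht.
unfold ptype.
destruct (excluded_middle_informative (exists M, mu_set le M)) as [[M [HM1 HM2]]|e]; last by right.
destruct (excluded_middle_informative _) as [e2|Hn]; first by left.
exfalso; apply: Hn.
exists M; split; first by split.
have [m [Mm _]] := HM1 x0.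
exists m => x; split => [Mx|->//].
apply: NNPP => Hxm.
have [H1 H2] := HM2 x m Mx Mm Hxm.
by case: (Ht x m).
Qed.

Theorem corollary3p9 (S : signature) (Eq : term S nat * term S nat -> Prop)
  (A : algebra S) :
  fin_presented Eq A ->
  (con_chain A -> inhabited (coexact Eq A) ->
     (forall u1 u2 : coexact Eq A, unif_le u1 u2 \/ unif_le u2 u1) /\
     (ptype (@unif_le S Eq A) = type1 \/ ptype (@unif_le S Eq A) = type0)) /\
  (simple A ->
     ~ inhabited (coexact Eq A) \/ ptype (@unif_le S Eq A) = type1).
Proof.
move=> _.
have tot : con_chain A -> forall u1 u2 : coexact Eq A, unif_le u1 u2 \/ unif_le u2 u1.
  move=> Hc u1 u2.
  case: (Hc _ _ (@ker_cong _ _ _ u1) (@ker_cong _ _ _ u2)) => H.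
  - by right; apply: ker_le.
  - by left; apply: ker_le.
split.
  move=> Hc Hi; split; first exact: tot.
  by apply: ptype_total => //; exact: tot.
move=> [_ Hs].
case: (classic (inhabited (coexact Eq A))) => [[u0]|]; last by left.
right.
case: (classic (exists u : coexact Eq A, forall x y, cx_map u x = cx_map u y -> x = y)).
- move=> [m Hm]; apply: (@ptype_max _ _ m) => x.
  by apply: ker_le => a b /Hm ->.
- move=> Hn; apply: (@ptype_max _ _ u0) => x.
  apply: ker_le => a b _.
  have all : forall u : coexact Eq A, forall a b, cx_map u a = cx_map u b.
    move=> u; case: (Hs _ (@ker_cong _ _ _ u)) => // H.
    by exfalso; apply: Hn; exists u => p q /H.
  exact: all.
Qed.
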